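(* For all $\alpha>0$, $\sigma^2>0$ and $\delta>0$, $$L\big(\psi_1(\alpha,\sigma^2);\delta\big)\le\psi_2(\alpha,\sigma^2;\delta).$$
   Context: For real $\alpha\ge0$, $\sigma^2\ge0$ with $(\alpha,\sigma^2)\ne(0,0)$: $\psi_1(\alpha,\sigma^2)=\int_0^{\pi/2}\frac{\alpha\sin^2\theta}{(\alpha^2\sin^2\theta+\sigma^2)^{1/2}}d\theta$ and $\psi_2(\alpha,\sigma^2;\delta)=\frac4\delta\big(\alpha^2+\sigma^2+1-\int_0^{\pi/2}\frac{2\alpha^2\sin^2\theta+\sigma^2}{(\alpha^2\sin^2\theta+\sigma^2)^{1/2}}d\theta\big)$. For $s\ge0$ let $\phi_1(s)=\int_0^{\pi/2}\frac{\sin^2\theta}{(\sin^2\theta+s^2)^{1/2}}d\theta$ (strictly decreasing, $\phi_1(0)=1$, $\phi_1(s)\to0$ as $s\to\infty$, with inverse $\phi_1^{-1}:(0,1]\to[0,\infty)$) and $\phi_2(s)=\int_0^{\pi/2}\frac{2\sin^2\theta+s^2}{(\sin^2\theta+s^2)^{1/2}}d\theta$. For $\alpha\in(0,1)$ and $\delta>0$ define $L(\alpha;\delta)=\frac4\delta\Big(1-\frac{\phi_2^2(\phi_1^{-1}(\alpha))}{4[1+(\phi_1^{-1}(\alpha))^2]}\Big)$. *)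

(* Defs.v *)
From Stdlib Require Import Reals ClassicalEpsilon.
Open Scope R_scope.

(* The Riemann integral of f over [a,b] as a total function: the value of
   RiemannInt for any integrability proof (the value is proof-independent,
   RiemannInt_P5); an arbitrary default if f is not Riemann integrable. *)
Definition Rint (f : R -> R) (a b : R) : R :=
  epsilon (inhabits 0)
    (fun I => exists pr : Riemann_integrable f a b, RiemannInt pr = I).

Definition psi1 (alpha s2 : R) : R :=
  Rint (fun t => alpha * (sin t)^2 / sqrt (alpha^2 * (sin t)^2 + s2)) 0 (PI/2).

Definition psi2 (alpha s2 delta : R) : R :=
  4 / delta * (alpha^2 + s2 + 1 -
    Rint (fun t => (2 * alpha^2 * (sin t)^2 + s2) / sqrt (alpha^2 * (sin t)^2 + s2))
      0 (PI/2)).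

Definition phi1 (s : R) : R :=
  Rint (fun t => (sin t)^2 / sqrt ((sin t)^2 + s^2)) 0 (PI/2).

Definition phi2 (s : R) : R :=
  Rint (fun t => (2 * (sin t)^2 + s^2) / sqrt ((sin t)^2 + s^2)) 0 (PI/2).

(* Inverse of phi1 on (0,1]: the s >= 0 with phi1 s = a
   (unique since phi1 is strictly decreasing on [0,oo)). *)
Definition phi1_inv (a : R) : R :=
  epsilon (inhabits 0) (fun s => 0 <= s /\ phi1 s = a).

Definition Lfun (alpha delta : R) : R :=
  let s := phi1_inv alpha in
  4 / delta * (1 - (phi2 s)^2 / (4 * (1 + s^2))).

(* Main.v *)
Require Import Defs.
From Stdlib Require Import Reals.
From Stdlib Require Import Lra ClassicalEpsilon FunctionalExtensionality.
From Coquelicot Require Import Coquelicot.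
Open Scope R_scope.

Lemma Rint_RInt f a b : a <= b -> (forall x, a <= x <= b -> continuous f x) ->
  Rint f a b = RInt f a b.
Proof.
intros Hab Hc.
assert (H : ex_RInt f a b).
{ apply (ex_RInt_continuous (V:=R_CompleteNormedModule)). rewrite Rmin_left, Rmax_right; auto. }
unfold Rint.
destruct (epsilon_spec (inhabits 0) (fun I => exists pr : Riemann_integrable f a b, RiemannInt pr = I)) as [pr Hpr].
- exists (RiemannInt (ex_RInt_Reals_0 _ _ _ H)), (ex_RInt_Reals_0 _ _ _ H); reflexivity.
- rewrite <- Hpr. symmetry. apply RInt_Reals.
Qed.

Definition g (u : R) := fun t => (sin t)^2 / sqrt ((sin t)^2 + u^2).

Lemma g0 : g 0 = fun t => Rabs (sin t).
Proof.
apply functional_extensionality; intro t; unfold g.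
destruct (Req_dec (sin t) 0) as [E|E].
- rewrite E. replace (0^2+0^2) with 0 by ring. rewrite sqrt_0, Rabs_R0. unfold Rdiv. ring.
- replace (sin t ^2 + 0^2) with (Rsqr (sin t)) by (unfold Rsqr; ring).
  rewrite sqrt_Rsqr_abs. rewrite <- pow2_abs. field. apply Rabs_no_R0; auto.
Qed.

Lemma cont_g u x : 0 <= u -> continuous (g u) x.
Proof.
intro Hu. destruct (Req_dec u 0) as [E|E].
- subst u. rewrite g0. apply continuous_Rabs_comp. apply continuous_sin.
- assert (Hu' : 0 < u) by lra. unfold g.
  apply (ex_derive_continuous (V:=R_CompleteNormedModule)). auto_derive.
  assert (0 < sin x * (sin x * 1) + u * (u * 1)) by nra.
  split; [auto | split; [ | auto]]. apply Rgt_not_eq. apply sqrt_lt_R0. auto.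
Qed.

Lemma PI2_pos : 0 < PI/2.
Proof. generalize PI_RGT_0; lra. Qed.

Lemma phi1_strict u v : 0 <= u -> u < v -> phi1 v < phi1 u.
Proof.
intros Hu Huv. unfold phi1.
change (Rint (g v) 0 (PI/2) < Rint (g u) 0 (PI/2)).
generalize PI2_pos; intro HP.
rewrite !Rint_RInt; try lra; try (intros; apply cont_g; lra).
apply RInt_lt; try lra; try (intros; apply cont_g; lra).
intros x Hx. unfold g.
assert (Hs : 0 < sin x) by (apply sin_gt_0; lra).
assert (HA : 0 < sqrt (sin x ^2 + u^2)) by (apply sqrt_lt_R0; nra).
assert (HAB : sqrt (sin x ^2 + u^2) < sqrt (sin x ^2 + v^2)) by (apply sqrt_lt_1_alt; nra).
unfold Rdiv. apply Rmult_lt_compat_l; [nra|].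
apply Rinv_lt_contravar; nra.
Qed.

Lemma phi1_inj u v : 0 <= u -> 0 <= v -> phi1 u = phi1 v -> u = v.
Proof.
intros Hu Hv E. destruct (Rtotal_order u v) as [H|[H|H]]; auto.
- generalize (phi1_strict u v Hu H); lra.
- generalize (phi1_strict v u Hv H); lra.
Qed.

Lemma phi1_inv_eq s : 0 <= s -> phi1_inv (phi1 s) = s.
Proof.
intro Hs. unfold phi1_inv.
destruct (epsilon_spec (inhabits 0) (fun x => 0 <= x /\ phi1 x = phi1 s)) as [H1 H2].
- exists s; split; auto.
- apply phi1_inj; auto.
Qed.

Definition h (s : R) := fun t => (2 * (sin t)^2 + s^2) / sqrt ((sin t)^2 + s^2).

Lemma cont_h s x : 0 < s -> continuous (h s) x.
Proof.
intro Hs. unfold h.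
apply (ex_derive_continuous (V:=R_CompleteNormedModule)). auto_derive.
assert (0 < sin x * (sin x * 1) + s * (s * 1)) by nra.
split; [auto | split; [ | auto]]. apply Rgt_not_eq. apply sqrt_lt_R0. auto.
Qed.

Lemma Rint_scal_h a s : 0 < s -> Rint (fun t => a * h s t) 0 (PI/2) = a * Rint (h s) 0 (PI/2).
Proof.
intro Hs. generalize PI2_pos; intro HP.
assert (Hex : ex_RInt (h s) 0 (PI/2)).
{ apply (ex_RInt_continuous (V:=R_CompleteNormedModule)). intros; apply cont_h; auto. }
rewrite !Rint_RInt; try lra.
- exact (RInt_scal (V:=R_CompleteNormedModule) (h s) 0 (PI/2) a Hex).
- intros; apply cont_h; auto.
- intros. apply (continuous_mult (K:=R_AbsRing) (fun _ => a) (h s)).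
  + apply continuous_const.
  + apply cont_h; auto.
Qed.

Theorem mainTheorem13 (alpha s2 delta : R) :
  0 < alpha -> 0 < s2 -> 0 < delta ->
  Lfun (psi1 alpha s2) delta <= psi2 alpha s2 delta.
Proof.
intros Ha Hs2 Hd.
set (s := sqrt s2 / alpha).
assert (Hsq : 0 < sqrt s2) by (apply sqrt_lt_R0; auto).
assert (Hs : 0 < s) by (unfold s; apply Rdiv_lt_0_compat; auto).
assert (Hss : s^2 = s2 / alpha^2).
{ unfold s. unfold Rdiv. rewrite Rpow_mult_distr, pow2_sqrt by lra.
  rewrite pow_inv. reflexivity. }
assert (Hkey : forall x, 0 <= x -> sqrt (alpha^2 * x + s2) = alpha * sqrt (x + s^2)).
{ intros x Hx. replace (alpha^2 * x + s2) with (alpha^2 * (x + s^2))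
    by (rewrite Hss; field; lra).
  rewrite sqrt_mult_alt by (apply pow2_ge_0). rewrite sqrt_pow2 by lra. reflexivity. }
assert (E1 : psi1 alpha s2 = phi1 s).
{ unfold psi1, phi1. f_equal. apply functional_extensionality; intro t.
  rewrite Hkey by apply pow2_ge_0.
  assert (0 < sqrt (sin t ^2 + s^2)) by (apply sqrt_lt_R0; nra).
  field. split; lra. }
assert (E2 : psi2 alpha s2 delta = 4 / delta * (alpha^2 + s2 + 1 - alpha * phi2 s)).
{ unfold psi2. f_equal. f_equal.
  change (phi2 s) with (Rint (h s) 0 (PI/2)). rewrite <- Rint_scal_h by auto.
  f_equal. apply functional_extensionality; intro t. unfold h.
  rewrite Hkey by apply pow2_ge_0.
  assert (0 < sqrt (sin t ^2 + s^2)) by (apply sqrt_lt_R0; nra).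
  assert (Hs2e : s2 = alpha^2 * s^2) by (rewrite Hss; field; lra).
  rewrite Hs2e. field. split; lra. }
rewrite E1, E2. unfold Lfun. rewrite phi1_inv_eq by lra.
set (P := phi2 s).
assert (Hs2' : s2 = alpha^2 * s^2) by (rewrite Hss; field; lra).
rewrite Hs2'.
apply Rmult_le_compat_l.
- apply Rlt_le, Rdiv_lt_0_compat; lra.
- set (c := 1 + s^2).
  assert (Hc : 0 < c) by (unfold c; nra).
  replace (alpha ^ 2 + alpha ^ 2 * s ^ 2 + 1 - alpha * P) with
    ((1 - P ^ 2 / (4 * c)) + (2*alpha*c - P)^2 / (4*c)) by (unfold c; field; nra).
  assert (0 <= (2*alpha*c - P)^2 / (4*c)).
  { apply Rdiv_le_0_compat; [apply pow2_ge_0 | lra]. }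
  lra.
Qed.
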